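(* Let $k \geq 1$ be an integer and let $M$ be a positive real number. Then there exists an integer $d$ such that, for each $i = 1, \ldots, k$, $K_i := \mathbb{Q}(\sqrt{d+i})$ is a real quadratic field with $|Po(K_i)| > M$; and there also exists an integer $d'$ such that, for each $i = 1, \ldots, k$, $K_i' := \mathbb{Q}(\sqrt{d'+i})$ is an imaginary quadratic field with $|Po(K_i')| > M$.
   Context: For a number field $K$ with ring of integers $\mathcal{O}_K$ and ideal class group $Cl_K$, and for each prime power $q$, let $\Pi_q(K)$ be the product of all prime ideals $\mathfrak{p}$ of $\mathcal{O}_K$ with absolute norm $N_{K/\mathbb{Q}}\mathfrak{p} = q$ (and $\Pi_q(K) = \mathcal{O}_K$ if there are no such primes). The Pólya group $Po(K)$ is the subgroup of $Cl_K$ generated by the classes $[\Pi_q(K)]$ over all prime powers $q$. *)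

(* Defs.v *)
From mathcomp Require Import all_boot all_order all_algebra all_field.
From mathcomp Require Import reals.
Set Implicit Arguments. Unset Strict Implicit. Unset Printing Implicit Defensive.
Import Order.TTheory GRing.Theory Num.Theory.
Local Open Scope ring_scope.

Definition aset := algC -> Prop.

Definition Kfield (m : int) : aset :=
  fun x => exists a b : rat, x = ratr a + ratr b * sqrtC (m%:~R).

Definition OK (m : int) : aset := fun x => Kfield m x /\ x \in Aint.

Definition ideq (I J : aset) : Prop := forall x, I x <-> J x.

Definition is_ideal (m : int) (I : aset) : Prop :=
  [/\ forall x, I x -> OK m x, I 0,
      forall x y, I x -> I y -> I (x + y) &
      forall r x, OK m r -> I x -> I (r * x)].

Definition nonzero_ideal (m : int) (I : aset) : Prop :=
  is_ideal m I /\ exists x, I x /\ x != 0.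

Definition prodI (I J : aset) : aset :=
  fun x => exists n (a b : 'I_n -> algC),
    (forall i, I (a i) /\ J (b i)) /\ x = \sum_(i < n) a i * b i.

Definition prodL (m : int) (s : seq aset) : aset := foldr prodI (OK m) s.

Definition is_prime_ideal (m : int) (P : aset) : Prop :=
  [/\ nonzero_ideal m P, (exists x, OK m x /\ ~ P x) &
      forall x y, OK m x -> OK m y -> P (x * y) -> P x \/ P y].

(* absolute norm N(P) = #(O_K / P) = q *)
Definition has_norm (m : int) (P : aset) (q : nat) : Prop :=
  exists r : seq algC, [/\ size r = q, (forall y, y \in r -> OK m y),
    (forall x, OK m x -> exists2 y, y \in r & P (x - y)) &
    (forall i j, (i < q)%N -> (j < q)%N -> i <> j ->
        ~ P (nth 0 r i - nth 0 r j))].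

Definition prime_power (q : nat) : Prop :=
  exists p e, [/\ prime p, (0 < e)%N & q = (p ^ e)%N].

(* Pi = Pi_q(K): product of all (distinct) prime ideals of norm q *)
Definition is_Pi (m : int) (q : nat) (Pi : aset) : Prop :=
  exists s : seq aset,
    [/\ forall P, (is_prime_ideal m P /\ has_norm m P q) <->
                  exists2 i, (i < size s)%N & ideq P (nth (OK m) s i),
        forall i, (i < size s)%N -> is_prime_ideal m (nth (OK m) s i)
                                     /\ has_norm m (nth (OK m) s i) q,
        forall i j, (i < size s)%N -> (j < size s)%N -> i <> j ->
                  ~ ideq (nth (OK m) s i) (nth (OK m) s j) &
        ideq Pi (prodL m s)].

Definition scaleI (a : algC) (I : aset) : aset :=
  fun x => exists2 y, I y & x = a * y.

Definition ideal_equiv (m : int) (I J : aset) : Prop :=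
  exists a b, [/\ OK m a, OK m b, a != 0, b != 0 & ideq (scaleI a I) (scaleI b J)].

(* the class of I lies in the subgroup generated by the classes [Pi_q]:
   [I] * [prod_B Pi] = [prod_A Pi] for finite families A, B of prime powers *)
Definition in_Polya (m : int) (I : aset) : Prop :=
  nonzero_ideal m I /\
  exists (qa qb : seq nat) (Pa Pb : seq aset),
    [/\ size Pa = size qa, size Pb = size qb,
        forall i, (i < size qa)%N ->
           prime_power (nth 0%N qa i) /\ is_Pi m (nth 0%N qa i) (nth (OK m) Pa i),
        forall i, (i < size qb)%N ->
           prime_power (nth 0%N qb i) /\ is_Pi m (nth 0%N qb i) (nth (OK m) Pb i) &
        ideal_equiv m (prodI I (prodL m Pb)) (prodL m Pa)].

(* |Po(Q(sqrt m))| > M : there are N > M pairwise distinct classes in Po *)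
Definition polya_gt (R : realType) (m : int) (M : R) : Prop :=
  exists s : seq aset,
    [/\ M < (size s)%:R,
        forall i, (i < size s)%N -> in_Polya m (nth (OK m) s i) &
        forall i j, (i < size s)%N -> (j < size s)%N -> i <> j ->
          ~ ideal_equiv m (nth (OK m) s i) (nth (OK m) s j)].

Definition not_square (m : int) : Prop := ~ exists n : int, m = n ^+ 2.

(* Main.v *)
Require Import Defs.
From mathcomp Require Import all_boot all_order all_algebra all_field.
From mathcomp Require Import reals.
Import Order.TTheory GRing.Theory Num.Theory.
Local Open Scope ring_scope.
From mathcomp Require Import ring zify.
From Stdlib Require Import Classical.
Set Implicit Arguments. Unset Strict Implicit. Unset Printing Implicit Defensive.

Lemma Aint_of_tr_norm (x y : algC) :
  x + y \is a Num.int -> x * y \is a Num.int -> x \in Aint.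
Proof.
move=> Hs Hp.
pose q := ('X - x%:P) * ('X - y%:P).
have Eq : q = 'X^2 - (x + y)%:P * 'X + (x * y)%:P.
  rewrite /q polyCD polyCM; rewrite mulrBl !mulrBr -expr2.
  rewrite [_%:P * 'X]mulrC. rewrite -polyCM.
  ring.
apply: (@root_monic_Aint q).
- by rewrite /q rootM root_XsubC eqxx.
- by rewrite /q rpredM // monicXsubC.
- rewrite Eq; apply/polyOverP => i.
  rewrite coefD coefB coefXn coefCM coefX !coefC.
  case: i => [|[|[|i]]] /=; rewrite ?mulr0 ?mulr1 ?subr0 ?sub0r ?add0r ?addr0 //.
  by rewrite rpredN.
Qed.

Section Quad.
Variable m : int.
Local Notation s := (sqrtC (m%:~R : algC)).

Lemma ss : s * s = m%:~R.
Proof. by rewrite -expr2 sqrtCK. Qed.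

Ltac sring := let H := fresh "H" in let t := fresh "t" in
  pose proof ss as H; set t := sqrtC _ in H *; rewrite -?H; ring.

Lemma s_Aint : s \in Aint.
Proof.
apply: (@root_monic_Aint ('X^2 - (m%:~R)%:P)).
- by rewrite /root !hornerE sqrtCK subrr.
- by rewrite monicXnsubC.
- apply/polyOverP => i; rewrite coefB coefXn coefC.
  case: i => [|[|[|i]]] /=; rewrite ?subr0 ?sub0r ?subrr //.
  by rewrite rpredN intr_int.
Qed.

Definition cpair (x y : algC) := exists C D, [/\ C \in Crat, D \in Crat,
   x = C + D * s & y = C - D * s].

Lemma cpair_C c : c \in Crat -> cpair c c.
Proof. by move=> Hc; exists c, 0; rewrite mul0r addr0 subr0 rpred0. Qed.

Lemma cpair_add x y x' y' : cpair x y -> cpair x' y' -> cpair (x + x') (y + y').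
Proof.
move=> [C [D [HC HD -> ->]]] [C' [D' [HC' HD' -> ->]]].
exists (C + C'), (D + D'); split; rewrite ?rpredD //; ring.
Qed.

Lemma cpair_mul x y x' y' : cpair x y -> cpair x' y' -> cpair (x * x') (y * y').
Proof.
move=> [C [D [HC HD -> ->]]] [C' [D' [HC' HD' -> ->]]].
exists (C * C' + D * D' * m%:~R), (C * D' + D * C'); split.
- by rewrite rpredD ?rpredM // rpred_int.
- by rewrite rpredD ?rpredM.
- sring.
- sring.
Qed.

Lemma cpair_horner (q : {poly rat}) x y : cpair x y ->
  cpair (map_poly ratr q).[x] (map_poly ratr q).[y].
Proof.
move=> H; elim/poly_ind: q => [|q c IH].
  by rewrite rmorph0 !horner0; apply: cpair_C; rewrite rpred0.
rewrite rmorphD rmorphM /= map_polyX map_polyC /= !hornerE.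
apply: cpair_add; first exact: cpair_mul.
by apply: cpair_C; rewrite Crat_rat.
Qed.

Hypothesis nsq : not_square m.

Lemma s_notCrat : s \notin Crat.
Proof.
apply/negP => Hs.
have := Cint_rat_Aint Hs s_Aint => /intrP [z Hz].
apply: nsq; exists z; apply: (@intr_inj algC).
by rewrite rmorphXn /= -Hz sqrtCK.
Qed.

Lemma rep_uniq A B A' B' : A \in Crat -> B \in Crat -> A' \in Crat -> B' \in Crat ->
  A + B * s = A' + B' * s -> A = A' /\ B = B'.
Proof.
move=> HA HB HA' HB' E.
have EB : B = B'.
  apply/eqP; apply: contraT => nB.
  have E2 : s * (B - B') = A' - A.
    have -> : A' - A = (A' + B' * s) - A - B' * s by ring.
    rewrite -E; ring.
  have : s = (A' - A) / (B - B') by rewrite -E2 mulfK // subr_eq0.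
  move=> Es; move: s_notCrat; rewrite Es.
  by rewrite rpred_div ?rpredB.
by split => //; move: E; rewrite EB => /addIr.
Qed.

Lemma conj_Aint A B : A \in Crat -> B \in Crat -> A + B * s \in Aint ->
  A - B * s \in Aint.
Proof.
move=> HA HB Hx.
have [q [Dq monq] _] := minCpolyP (A + B * s).
have Hc : cpair (A + B * s) (A - B * s) by exists A, B.
have [C [D [HC HD E1 E2]]] := cpair_horner q Hc.
have R0 := root_minCpoly (A + B * s).
move: R0; rewrite /root Dq E1 => /eqP E0.
have [C0 D0] : C = 0 /\ D = 0.
  apply: (@rep_uniq C D 0 0) => //; rewrite ?rpred0 //.
  by rewrite E0 mul0r addr0.
apply: (@root_monic_Aint (minCpoly (A + B * s))); last by [].
- by rewrite /root Dq E2 C0 D0 mul0r subr0.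
- exact: minCpoly_monic.
Qed.

Lemma tr_norm A B : A \in Crat -> B \in Crat -> A + B * s \in Aint ->
  exists X N : int, A + A = X%:~R /\ A ^+ 2 - m%:~R * B ^+ 2 = N%:~R.
Proof.
move=> HA HB Hx.
have Hy := conj_Aint HA HB Hx.
have E1 : (A + B * s) + (A - B * s) = A + A by ring.
have E2 : (A + B * s) * (A - B * s) = A ^+ 2 - m%:~R * B ^+ 2.
  by sring.
have /intrP [X HX] : A + A \is a Num.int.
  by apply: Cint_rat_Aint; [apply: rpredD | rewrite -E1; apply: rpredD].
have /intrP [N HN] : A ^+ 2 - m%:~R * B ^+ 2 \is a Num.int.
  apply: Cint_rat_Aint; last by rewrite -E2; apply: rpredM.
  by apply: rpredB; apply: rpredM; rewrite ?rpred_int ?rpredX.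
by exists X, N.
Qed.

Lemma Aint_of_coords A B (X N : int) : A + A = X%:~R ->
  A ^+ 2 - m%:~R * B ^+ 2 = N%:~R -> A + B * s \in Aint.
Proof.
move=> HX HN; apply: (@Aint_of_tr_norm _ (A - B * s)).
  have -> : A + B * s + (A - B * s) = A + A by ring.
  by rewrite HX intr_int.
have -> : (A + B * s) * (A - B * s) = A ^+ 2 - m%:~R * B ^+ 2 by sring.
by rewrite HN intr_int.
Qed.

End Quad.

Ltac sring := let H := fresh "H" in let t := fresh "t" in
  match goal with |- context [sqrtC (?z%:~R)] =>
    pose proof (ss z) as H; set t := sqrtC (z%:~R) in H *; rewrite -?H; ring end.
Ltac sfield := let H := fresh "H" in let t := fresh "t" in
  match goal with |- context [sqrtC (?z%:~R)] =>
    pose proof (ss z) as H; set t := sqrtC (z%:~R) in H *; rewrite -?H; field end.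

Lemma Fp_int0 (p : nat) (z : int) : prime p ->
  ((z%:~R : 'F_p) == 0) = ((p%:Z) %| z)%Z.
Proof.
move=> pr; rewrite dvdzE /= (dvdn_pcharf (pchar_Fp pr)).
case: z => n /=; first by rewrite pmulrn.
by rewrite NegzE mulrNz oppr_eq0 pmulrn.
Qed.

Lemma Fp_int0P (p : nat) (z : int) : prime p ->
  (z%:~R : 'F_p) = 0 <-> ((p%:Z) %| z)%Z.
Proof. by move=> pr; rewrite -(Fp_int0 _ pr); split => [->|/eqP]. Qed.

Lemma Fp_p0 (p : nat) : prime p -> (p%:R : 'F_p) = 0.
Proof. by move=> pr; rewrite pchar_Fp_0. Qed.

Lemma Fp_2 (p : nat) : prime p -> odd p -> (2%:R : 'F_p) != 0.
Proof.
move=> pr po; rewrite -(dvdn_pcharf (pchar_Fp pr)).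
apply/negP => H; have := dvdn_leq (isT : (0 < 2)%N) H; have := prime_gt1 pr.
by move: po; case: (p) => [|[|[|]]].
Qed.

Lemma Fp_half (p : nat) : prime p -> odd p ->
  ((p.+1./2)%:R : 'F_p) * 2%:R = 1.
Proof.
move=> pr po; rewrite -natrM muln2.
have -> : (p.+1./2).*2 = p.+1.
  by rewrite -[in RHS](odd_double_half p.+1) /= po.
by rewrite -addn1 natrD Fp_p0 // add0r.
Qed.

Lemma dvdz_prime_mul (p : nat) (a b : int) : prime p ->
  ((p%:Z) %| a * b)%Z -> ((p%:Z) %| a)%Z \/ ((p%:Z) %| b)%Z.
Proof.
move=> pr; rewrite -!Fp_int0 // rmorphM /= mulf_eq0 => /orP[]; by [left|right].
Qed.

Definition Jp (m : int) (p : nat) : aset :=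
  fun x => OK m x /\ x * sqrtC (m%:~R) / p%:R \in Aint.

Definition coords (m : int) (x A B : algC) :=
  [/\ A \in Crat, B \in Crat & x = A + B * sqrtC (m%:~R)].

Lemma OK_coords m x : OK m x -> exists A B, coords m x A B.
Proof.
move=> [[a [b ->]] _]; exists (ratr a), (ratr b); split => //; exact: Crat_rat.
Qed.

Lemma coords_K m x A B : coords m x A B -> Kfield m x.
Proof.
move=> [/CratP[a ->] /CratP[b ->] ->]; by exists a, b.
Qed.

Lemma coords_add m x y A B A' B' : coords m x A B -> coords m y A' B' ->
  coords m (x + y) (A + A') (B + B').
Proof. move=> [HA HB ->] [HA' HB' ->]; split; rewrite ?rpredD //; ring. Qed.

Lemma coords_mul m x y A B A' B' : coords m x A B -> coords m y A' B' ->
  coords m (x * y) (A * A' + m%:~R * B * B') (A * B' + A' * B).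
Proof.
move=> [HA HB ->] [HA' HB' ->]; split.
- by rewrite rpredD ?rpredM ?rpred_int.
- by rewrite rpredD ?rpredM.
- sring.
Qed.

Lemma coords_C m c : c \in Crat -> coords m c c 0.
Proof. by move=> Hc; split; rewrite ?rpred0 // mul0r addr0. Qed.

Lemma coords_s m : coords m (sqrtC (m%:~R)) 0 1.
Proof. by split; rewrite ?rpred0 ?rpred1 // add0r mul1r. Qed.

Lemma OK_of_coords m x A B : coords m x A B -> x \in Aint -> OK m x.
Proof. by move=> Hc Hx; split => //; apply: coords_K Hc. Qed.

Lemma OK_add m x y : OK m x -> OK m y -> OK m (x + y).
Proof.
move=> Hx Hy; have [A [B Hc]] := OK_coords Hx; have [A' [B' Hc']] := OK_coords Hy.
apply: OK_of_coords (coords_add Hc Hc') _; rewrite rpredD //; [case: Hx|case: Hy] => //.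
Qed.

Lemma OK_mul m x y : OK m x -> OK m y -> OK m (x * y).
Proof.
move=> Hx Hy; have [A [B Hc]] := OK_coords Hx; have [A' [B' Hc']] := OK_coords Hy.
apply: OK_of_coords (coords_mul Hc Hc') _; rewrite rpredM //; [case: Hx|case: Hy] => //.
Qed.

Lemma OK_int m (z : int) : OK m z%:~R.
Proof. by apply: OK_of_coords (coords_C _ _) _; rewrite ?rpred_int ?Aint_int. Qed.

Lemma OK_nat m (n : nat) : OK m n%:R.
Proof. by rewrite pmulrn; apply: OK_int. Qed.

Lemma OK_s m : OK m (sqrtC (m%:~R)).
Proof. by apply: OK_of_coords (coords_s m) _; apply: s_Aint. Qed.

Lemma OK_opp m x : OK m x -> OK m (- x).
Proof. by move=> Hx; rewrite -mulN1r; apply: OK_mul => //; apply: (OK_int m (-1)). Qed.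

Lemma ideal_sum m (I : aset) n (F : 'I_n -> algC) :
  is_ideal m I -> (forall i, I (F i)) -> I (\sum_i F i).
Proof.
move=> [_ H0 HD _] HF; elim/big_ind: _ => //.
Qed.

Lemma ideal_mulr m (I : aset) r x : is_ideal m I -> OK m r -> I x -> I (x * r).
Proof. by move=> [_ _ _ HM] Hr Hx; rewrite mulrC; apply: HM. Qed.

Lemma ideal_opp m (I : aset) x : is_ideal m I -> I x -> I (- x).
Proof.
move=> [_ _ _ HM] Hx; rewrite -mulN1r; apply: HM => //.
by have := OK_int m (-1); rewrite mulrN1z.
Qed.

Lemma ideal_sub m (I : aset) x y : is_ideal m I -> I x -> I y -> I (x - y).
Proof. by move=> HI Hx Hy; case: (HI) => _ _ HD _; apply: HD => //; apply: ideal_opp HI Hy. Qed.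

Lemma OK1 m : OK m 1.
Proof. by have := OK_int m 1; rewrite mulr1z. Qed.

Lemma norm_char m (I : aset) n : is_ideal m I -> has_norm m I n -> I n%:R.
Proof.
move=> HI [r [Hsz Hr Hcomp Hdist]].
have Hi : forall i : 'I_n, exists j : 'I_n, I (nth 0 r i + 1 - nth 0 r j).
  move=> i; have Hri : nth 0 r i \in r by rewrite mem_nth // Hsz.
  have [y Hy HIy] := Hcomp _ (OK_add (Hr _ Hri) (OK1 m)).
  have Hj : (index y r < n)%N by rewrite -Hsz index_mem.
  by exists (Ordinal Hj); rewrite /= nth_index.
have [f Hf] := fin_all_exists Hi.
have finj : injective f.
  move=> i j Eij; apply/val_inj/eqP; apply: contraT => /eqP nij; exfalso.
  apply: (Hdist i j (ltn_ord i) (ltn_ord j) nij).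
  have := ideal_sub HI (Hf i) (Hf j); rewrite Eij.
  by have -> : forall a b c : algC, a + 1 - c - (b + 1 - c) = a - b by move=> *; ring.
have := ideal_sum HI Hf.
rewrite sumrB big_split /= sumr_const card_ord.
have E : \sum_(i < n) nth 0 r (f i) = \sum_(i < n) nth 0 r i by rewrite [RHS](reindex_inj finj).
rewrite E.
by have -> : forall a b : algC, a + b - a = b by move=> *; ring.
Qed.

Lemma ideq_prime m (P Q : aset) : ideq P Q -> is_prime_ideal m Q -> is_prime_ideal m P.
Proof.
move=> E [[[H1 H2 H3 H4] [x [Hx nx]]] [y [Hy ny]] H5]; split.
- split; last by exists x; rewrite E.
  split.
  + by move=> z /E /H1.
  + by apply/E.
  + by move=> a b /E Ha /E Hb; apply/E; apply: H3.
  + by move=> a b Ha /E Hb; apply/E; apply: H4.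
- by exists y; rewrite E.
- by move=> a b Ha Hb /E H; case: (H5 a b Ha Hb H) => /E; [left|right].
Qed.

Lemma ideq_norm m (P Q : aset) n : ideq P Q -> has_norm m Q n -> has_norm m P n.
Proof.
move=> E [r [H1 H2 H3 H4]]; exists r; split => //.
- by move=> x Hx; have [y Hy /E Hy'] := H3 x Hx; exists y.
- by move=> i j Hi Hj nij /E; apply: H4.
Qed.

Lemma prodI_OK m (I : aset) : is_ideal m I -> ideq I (prodI I (OK m)).
Proof.
move=> HI x; split.
- move=> Hx; exists 1%N, (fun _ => x), (fun _ => 1); split.
    by move=> _; split; [exact: Hx | exact: OK1].
  by rewrite big_ord1 mulr1.
- move=> [n [a [b [Hab ->]]]]; apply: (ideal_sum HI) => i.
  by have [Ha Hb] := Hab i; apply: (ideal_mulr HI Hb Ha).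
Qed.

Section J.
Variables (m : int) (p : nat) (c0 : int).
Hypotheses (pr : prime p) (po : odd p) (Em : m = p%:Z * c0)
  (nc : ~~ ((p%:Z) %| c0)%Z).
Local Notation s := (sqrtC (m%:~R : algC)).

Lemma Hp0Z : (p%:Z) != 0.
Proof. apply/eqP => H; have E : p = 0%N by case: H. by move: pr; rewrite E. Qed.

Lemma Hp0R : (p%:R : algC) != 0.
Proof. by rewrite pnatr_eq0 -lt0n prime_gt0. Qed.

Lemma Emc : (m%:~R : algC) = p%:R * c0%:~R.
Proof. by rewrite Em rmorphM /= pmulrn. Qed.

Lemma nsq_m : not_square m.
Proof.
move=> [z Ez].
have : ((p%:Z) %| z * z)%Z.
  by rewrite -expr2 -Ez Em; apply/dvdzP; exists c0; rewrite mulrC.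
case/dvdz_prime_mul => // /dvdzP [z1 Ez1]; apply: (negP nc); apply/dvdzP;
  exists (z1 ^+ 2); apply: (mulfI Hp0Z); rewrite -Em Ez Ez1; ring.
Qed.


Lemma xs_coords A B : (A + B * s) * s / p%:R = B * c0%:~R + A / p%:R * s.
Proof.
have H := ss m; set t := sqrtC _ in H *.
have H2 : c0%:~R = t * t / p%:R :> algC by rewrite H Emc mulrAC divff ?mul1r // Hp0R.
rewrite H2; field; exact: Hp0R.
Qed.

Lemma KI x A B : coords m x A B -> x \in Aint ->
  exists X N U1 : int, [/\ A + A = X%:~R, A ^+ 2 - m%:~R * B ^+ 2 = N%:~R,
     (B + B) * c0%:~R = U1%:~R & c0 * X ^+ 2 - p%:Z * U1 ^+ 2 = 4 * c0 * N].
Proof.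
move=> [HA HB ->] Hx.
have [X [N [HX HN]]] := tr_norm nsq_m HA HB Hx.
have HBm : B * m%:~R \in Crat by rewrite rpredM ?rpred_int.
have Hxs : B * m%:~R + A * s \in Aint.
  have -> : B * m%:~R + A * s = (A + B * s) * s by sring.
  by rewrite rpredM // s_Aint.
have [U [_ [HU _]]] := tr_norm nsq_m HBm HA Hxs.
have HU2 : U ^+ 2 = m * (X ^+ 2 - 4 * N).
  apply: (@intr_inj algC); rewrite rmorphXn rmorphM rmorphB rmorphXn rmorphM /=.
  rewrite -HU -HX -HN; ring.
have HUU : ((p%:Z) %| U * U)%Z.
  by rewrite -expr2 HU2 Em; apply/dvdzP; exists (c0 * (X ^+ 2 - 4 * N)); ring.
have /dvdzP [U1 EU] : ((p%:Z) %| U)%Z by case: (dvdz_prime_mul pr HUU).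
exists X, N, U1; split => //.
  apply: (mulIf Hp0R); rewrite -mulrA [c0%:~R * _]mulrC -Emc.
  have -> : (B + B) * m%:~R = B * m%:~R + B * m%:~R by ring.
  by rewrite HU EU rmorphM /= pmulrn.
apply: (mulfI Hp0Z).
have -> : p%:Z * (c0 * X ^+ 2 - p%:Z * U1 ^+ 2) = m * X ^+ 2 - U ^+ 2.
  by rewrite Em EU; ring.
by rewrite HU2 Em; ring.
Qed.

Lemma J_iff x A B N : coords m x A B -> x \in Aint ->
  A ^+ 2 - m%:~R * B ^+ 2 = N%:~R ->
  (x * s / p%:R \in Aint <-> ((p%:Z) %| N)%Z).
Proof.
move=> Hc Hx HN; have [HA HB Ex] := Hc.
have HA' : A / p%:R \in Crat by rewrite rpred_div ?rpred_nat.
have HB' : B * c0%:~R \in Crat by rewrite rpredM ?rpred_int.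
have Eid : (B * c0%:~R) ^+ 2 - m%:~R * (A / p%:R) ^+ 2 = - (c0%:~R * N%:~R) / p%:R.
  rewrite -HN Emc; field; exact: Hp0R.
rewrite Ex xs_coords.
split.
- move=> H; have [_ [N' [_ HN']]] := tr_norm nsq_m HB' HA' H.
  have E : p%:Z * N' = - (c0 * N).
    apply: (@intr_inj algC); rewrite rmorphM rmorphN rmorphM /= -HN' Eid -pmulrn.
    field; exact: Hp0R.
  have : ((p%:Z) %| c0 * N)%Z.
    by apply/dvdzP; exists (- N'); rewrite mulNr [N' * _]mulrC E opprK.
  by case/dvdz_prime_mul => // H1; move: nc; rewrite H1.
- case/dvdzP => N1 EN.
  have [X [N0 [U1 [_ HN0 HU1 _]]]] := KI Hc Hx.
  apply: (@Aint_of_coords m _ _ U1 (- (c0 * N1))).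
    by rewrite -HU1; ring.
  rewrite Eid EN rmorphN !rmorphM /= -pmulrn; field; exact: Hp0R.
Qed.

Lemma J_OK x : Jp m p x -> OK m x.
Proof. by case. Qed.

Lemma J_iffN x A B N : coords m x A B -> OK m x ->
  A ^+ 2 - m%:~R * B ^+ 2 = N%:~R -> (Jp m p x <-> ((p%:Z) %| N)%Z).
Proof.
move=> Hc Hx HN; have Hx' : x \in Aint by case: Hx.
rewrite -(J_iff Hc Hx' HN); split; [by case | by split].
Qed.

Lemma OK_norm x : OK m x -> exists A B N, [/\ coords m x A B,
  A ^+ 2 - m%:~R * B ^+ 2 = N%:~R & (Jp m p x <-> ((p%:Z) %| N)%Z)].
Proof.
move=> Hx; have [A [B Hc]] := OK_coords Hx; have Hx' : x \in Aint by case: Hx.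
have [X [N [U1 [_ HN _ _]]]] := KI Hc Hx'.
by exists A, B, N; split => //; exact: (J_iffN Hc Hx HN).
Qed.

Lemma J_ideal : is_ideal m (Jp m p).
Proof.
split.
- by move=> x [].
- by split; [exact: (OK_int m 0) | rewrite !mul0r Aint0].
- move=> x y [Hx Hx'] [Hy Hy']; split; first exact: OK_add.
  by rewrite !mulrDl rpredD.
- move=> r x Hr [Hx Hx']; split; first exact: OK_mul.
  by rewrite -!mulrA rpredM //; [case: Hr | rewrite mulrA].
Qed.

Lemma J_p : Jp m p p%:R.
Proof.
split; first exact: OK_nat.
by rewrite mulrAC divff ?mul1r ?Hp0R // s_Aint.
Qed.

Lemma J_s : Jp m p s.
Proof.
split; first exact: OK_s.
by rewrite ss Emc mulrAC divff ?mul1r ?Hp0R // Aint_int.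
Qed.

Lemma J_1 : ~ Jp m p 1.
Proof.
have Hc : coords m 1 1 0 by apply: coords_C; rewrite rpred1.
have H1 : OK m 1 by have := OK_int m 1; rewrite mulr1z.
rewrite (@J_iffN _ _ _ 1 Hc H1); last by rewrite expr0n mulr0 subr0 expr1n.
by rewrite dvdzE /= dvdn1 => /eqP E; move: pr; rewrite E.
Qed.

Lemma coords_normM x y A B A' B' N N' :
  coords m x A B -> coords m y A' B' ->
  A ^+ 2 - m%:~R * B ^+ 2 = N%:~R -> A' ^+ 2 - m%:~R * B' ^+ 2 = N'%:~R ->
  (A * A' + m%:~R * B * B') ^+ 2 - m%:~R * (A * B' + A' * B) ^+ 2 = (N * N')%:~R.
Proof. by move=> _ _ HN HN'; rewrite rmorphM /= -HN -HN'; ring. Qed.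

Lemma J_prime : is_prime_ideal m (Jp m p).
Proof.
split.
- split; first exact: J_ideal.
  by exists p%:R; split; [exact: J_p | rewrite pnatr_eq0 -lt0n prime_gt0].
- by exists 1; split; [have := OK_int m 1; rewrite mulr1z | exact: J_1].
- move=> x y Hx Hy.
  have [A [B [N [Hc HN HJ]]]] := OK_norm Hx.
  have [A' [B' [N' [Hc' HN' HJ']]]] := OK_norm Hy.
  rewrite (J_iffN (coords_mul Hc Hc') (OK_mul Hx Hy) (coords_normM Hc Hc' HN HN')).
  by rewrite HJ HJ'; apply: dvdz_prime_mul.
Qed.

Lemma Fp_modz (z : int) : ((z %% p)%Z%:~R : 'F_p) = z%:~R.
Proof.
have E := divz_eq z p; move: E; set q := (z %/ p)%Z; set r := (z %% p)%Z => E.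
by rewrite [in RHS]E [in RHS]intrD [in RHS]intrM -pmulrn Fp_p0 // mulr0 add0r.
Qed.

Lemma J_norm : has_norm m (Jp m p) p.
Proof.
exists [seq (i%:R : algC) | i <- iota 0 p]; split.
- by rewrite size_map size_iota.
- by move=> y /mapP [i _ ->]; apply: OK_nat.
- move=> x Hx; have [A [B Hc]] := OK_coords Hx; have Hx' : x \in Aint by case: Hx.
  have [X [N [U1 [HX HN HU1 HKI]]]] := KI Hc Hx'.
  pose h : int := (p.+1./2)%:Z.
  pose jz := ((X * h) %% p)%Z.
  have jz0 : 0 <= jz by apply: modz_ge0; exact: Hp0Z.
  have jzp : jz < p%:Z by apply: ltz_pmod; rewrite ltz_nat prime_gt0.
  pose j := `|jz|%N.
  have Ej : j%:Z = jz by rewrite /j gez0_abs.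
  exists (j%:R); first by apply: map_f; rewrite mem_iota add0n -ltz_nat Ej.
  have Hc2 : coords m (x - j%:R) (A - j%:R) B.
    have Hj : - (j%:R : algC) \in Crat by rewrite rpredN rpred_nat.
    by have := coords_add Hc (coords_C m Hj); rewrite addr0.
  pose N2 := N - X * j%:Z + j%:Z ^+ 2.
  have HN2 : (A - j%:R) ^+ 2 - m%:~R * B ^+ 2 = N2%:~R.
    have -> : (A - j%:R) ^+ 2 - m%:~R * B ^+ 2 =
       (A ^+ 2 - m%:~R * B ^+ 2) - (A + A) * j%:R + j%:R ^+ 2 by ring.
    by rewrite HN HX /N2 rmorphD rmorphB rmorphM rmorphXn /= -pmulrn.
  apply/(J_iffN Hc2 _ HN2); first by apply: OK_add => //; apply: OK_opp; apply: OK_nat.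
  have Eh : 2 * h = p%:Z + 1.
    have En : (2 * p.+1./2 = p + 1)%N.
      by rewrite mul2n addn1 -[in RHS](odd_double_half p.+1) /= po.
    rewrite /h; move: En; set k := (p.+1./2)%N; lia.
  pose qq := ((X * h) %/ p)%Z.
  have Ejz : jz = X * h - qq * p.
    have E := divz_eq (X * h) p; rewrite /jz /qq; move: E.
    set a := X * h; set b := (a %/ p)%Z; set c := (a %% p)%Z => E.
    by rewrite [in RHS]E; ring.
  have E2 : X - 2 * j%:Z = (2 * qq - X) * p.
    rewrite Ej Ejz; have -> : X - 2 * (X * h - qq * p) = X - X * (2 * h) + 2 * qq * p by ring.
    by rewrite Eh; ring.
  have E4 : 4 * c0 * N2 = p%:Z * (c0 * (2 * qq - X) ^+ 2 * p - U1 ^+ 2).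
    have -> : 4 * c0 * N2 = 4 * c0 * N - 4 * c0 * X * j%:Z + 4 * c0 * j%:Z ^+ 2 by rewrite /N2; ring.
    rewrite -HKI; have -> : c0 * X ^+ 2 - p%:Z * U1 ^+ 2 - 4 * c0 * X * j%:Z + 4 * c0 * j%:Z ^+ 2
      = c0 * (X - 2 * j%:Z) ^+ 2 - p%:Z * U1 ^+ 2 by ring.
    by rewrite E2; ring.
  have Hd : ((p%:Z) %| 4 * c0 * N2)%Z by rewrite E4; apply/dvdzP; eexists; rewrite mulrC.
  have n2 : ~~ ((p%:Z) %| 2)%Z.
    rewrite dvdzE /=; apply/negP => H; have := dvdn_leq (isT : (0 < 2)%N) H.
    by have := prime_gt1 pr; move: po; case: (p) => [|[|[|]]].
  case/dvdz_prime_mul: Hd => // Hd.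
  case/dvdz_prime_mul: Hd => // Hd; last by move: nc; rewrite Hd.
  have : ((p%:Z) %| 2 * 2)%Z by [].
  by case/dvdz_prime_mul => // H; move: n2; rewrite H.
- move=> i j ip jp nij.
  rewrite (nth_map 0%N) ?size_iota // (nth_map 0%N) ?size_iota // !nth_iota // !add0n.
  have Hc3 : coords m (i%:R - j%:R) (i%:R - j%:R) 0.
    by apply: coords_C; rewrite rpredB ?rpred_nat.
  have HN3 : (i%:R - j%:R : algC) ^+ 2 - m%:~R * 0 ^+ 2 = ((i%:Z - j%:Z) ^+ 2)%:~R.
    by rewrite expr0n mulr0 subr0 rmorphXn rmorphB /= -!pmulrn.
  rewrite (J_iffN Hc3 _ HN3); last by apply: OK_add; [apply: OK_nat | apply: OK_opp; apply: OK_nat].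
  move=> H; have : ((p%:Z) %| i%:Z - j%:Z)%Z by rewrite expr2 in H; case: (dvdz_prime_mul pr H).
  rewrite -Fp_int0 // intrB -!pmulrn subr_eq0 => /eqP E.
  have := congr1 (fun x : 'F_p => nat_of_ord x) E; rewrite /= !val_Fp_nat // !modn_small //.
Qed.

Lemma J_sub_P (P : aset) : is_prime_ideal m P -> P p%:R ->
  forall x, Jp m p x -> P x.
Proof.
move=> [[HI _] _ Hpr] Pp x Jx; have Hx := J_OK Jx.
have [A [B Hc]] := OK_coords Hx; have Hx' : x \in Aint by case: Hx.
have [X [N [U1 [HX HN HU1 HKI]]]] := KI Hc Hx'.
have /dvdzP [N1 EN] : ((p%:Z) %| N)%Z by rewrite -(J_iffN Hc Hx HN).
have HpX : ((p%:Z) %| X)%Z.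
  have : ((p%:Z) %| c0 * (X * X))%Z.
    apply/dvdzP; exists (4 * c0 * N1 + U1 ^+ 2).
    have E1 : c0 * X ^+ 2 = 4 * c0 * N + p%:Z * U1 ^+ 2 by rewrite -HKI; ring.
    by rewrite -expr2 E1 EN; ring.
  case/dvdz_prime_mul => // [H | H]; first by move: nc; rewrite H.
  by case: (dvdz_prime_mul pr H).
have /dvdzP [X1 EX] := HpX.
have [HA HB Ex] := Hc.
pose A2 := (A ^+ 2 + m%:~R * B ^+ 2) / p%:R.
pose B2 := (A * B + A * B) / p%:R.
have Hc2 : coords m (x * x / p%:R) A2 B2.
  split; first by rewrite /A2 rpred_div ?rpred_nat // rpredD ?rpredM ?rpredX ?rpred_int.
    by rewrite /B2 rpred_div ?rpred_nat // rpredD ?rpredM.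
  rewrite Ex /A2 /B2; sfield; exact: Hp0R.
have HX2 : A2 + A2 = (p%:Z * X1 ^+ 2 - 2 * N1)%:~R.
  have -> : A2 + A2 = ((A + A) ^+ 2 - 2%:R * (A ^+ 2 - m%:~R * B ^+ 2)) / p%:R.
    by rewrite /A2; ring.
  rewrite HX HN EX EN rmorphB !rmorphM ?rmorphXn /= -pmulrn; field; exact: Hp0R.
have HN2 : A2 ^+ 2 - m%:~R * B2 ^+ 2 = (N1 ^+ 2)%:~R.
  have -> : A2 ^+ 2 - m%:~R * B2 ^+ 2 = (A ^+ 2 - m%:~R * B ^+ 2) ^+ 2 / p%:R ^+ 2.
    by rewrite /A2 /B2; field; exact: Hp0R.
  rewrite HN EN rmorphXn rmorphM /= -pmulrn; field; exact: Hp0R.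
have Hr : OK m (x * x / p%:R).
  apply: OK_of_coords (Hc2) _; case: (Hc2) => _ _ ->; exact: Aint_of_coords HX2 HN2.
have Pxx : P (x * x).
  by have := ideal_mulr HI Hr Pp; rewrite mulrC divfK // Hp0R.
by case: (Hpr x x Hx Hx Pxx).
Qed.

Lemma P_sub_J (P : aset) : is_prime_ideal m P -> P p%:R ->
  forall y, P y -> Jp m p y.
Proof.
move=> [[HI _] [x0 [Hx0 nPx0]] _] Pp y Py.
have Hy : OK m y by case: HI => H _ _ _; apply: H.
have [A [B [N [Hc HN HJ]]]] := OK_norm Hy.
apply/HJ; apply: contraT => nd.
have [HA HB Ey] := Hc.
have HAi : A + B * s \in Aint by rewrite -Ey; case: Hy.
have Hy' : OK m (A - B * s).
  apply: (@OK_of_coords m _ A (- B)); last exact: (conj_Aint nsq_m HA HB HAi).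
  by split; rewrite ?rpredN //; ring.
have PN : P N%:~R.
  have := ideal_mulr HI Hy' Py; rewrite Ey.
  have -> : (A + B * s) * (A - B * s) = A ^+ 2 - m%:~R * B ^+ 2 by sring.
  by rewrite HN.
have cop : coprimez p N by rewrite coprimezE /= prime_coprime // -dvdzE.
have [[u v] /= Euv] := coprimezP _ _ cop.
have P1 : P 1.
  have -> : (1 : algC) = (u * p%:Z + v * N)%:~R by rewrite Euv.
  rewrite intrD !intrM; case: (HI) => _ _ HD _; apply: HD.
    by rewrite mulrC -pmulrn; apply: ideal_mulr HI (OK_int m u) Pp.
  by rewrite mulrC; apply: ideal_mulr HI (OK_int m v) PN.
by case: nPx0; rewrite -[x0]mul1r; apply: ideal_mulr HI Hx0 P1.
Qed.

Lemma J_classify (P : aset) : is_prime_ideal m P -> has_norm m P p ->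
  ideq P (Jp m p).
Proof.
move=> HP Hn; have Pp : P p%:R by apply: norm_char Hn; case: HP => [[]].
by move=> x; split; [apply: P_sub_J | apply: J_sub_P].
Qed.

Lemma J_Pi : is_Pi m p (Jp m p).
Proof.
exists [:: Jp m p]; split.
- move=> P; split.
    by move=> [HP Hn]; exists 0%N => //; apply: J_classify.
  move=> [[|i] // _ E]; split; first exact: ideq_prime E J_prime.
  exact: ideq_norm E J_norm.
- by move=> [|i] // _; split; [exact: J_prime | exact: J_norm].
- by move=> [|i] [|j].
- by apply: prodI_OK; exact: J_ideal.
Qed.

Lemma J_Polya : in_Polya m (Jp m p).
Proof.
split; first by case: J_prime.
exists [:: p], [::], [:: Jp m p], [::]; split => //.
- move=> [|i] // _; split; last exact: J_Pi.
  by exists p, 1%N; rewrite expn1.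
- exists 1, 1; split; rewrite ?oner_eq0 //; try exact: OK1.
Qed.

End J.

Lemma not_dvd4 (p : nat) : prime p -> odd p -> ~~ ((p%:Z) %| 4)%Z.
Proof.
move=> pr po; rewrite dvdzE /=; apply/negP => H.
have := dvdn_leq (isT : (0 < 4)%N) H; have := prime_gt1 pr.
move: po pr H; case: (p) => [|[|[|[|[|]]]]] //.
Qed.

Lemma obstruct (p : nat) (c0 X U1 z : int) : prime p -> odd p ->
  c0 * p%:Z * X ^+ 2 - U1 ^+ 2 = - 4 * z ->
  exists u : 'F_p, u ^+ 2 = z%:~R.
Proof.
move=> pr po E.
pose h : int := (p.+1./2)%:Z.
have Eh : 2 * h = p%:Z + 1.
  have En : (2 * p.+1./2 = p + 1)%N.
    by rewrite mul2n addn1 -[in RHS](odd_double_half p.+1) /= po.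
  rewrite /h; move: En; set k := (p.+1./2)%N; lia.
pose t := U1 * h.
have E4 : 4 * (t ^+ 2 - z) = p%:Z * (c0 * X ^+ 2 + 2 * U1 ^+ 2 + p%:Z * U1 ^+ 2).
  have Ez : 4 * z = U1 ^+ 2 - c0 * p%:Z * X ^+ 2.
    have -> : 4 * z = - (- 4 * z) by ring.
    by rewrite -E; ring.
  have -> : 4 * (t ^+ 2 - z) = U1 ^+ 2 * (2 * h) ^+ 2 - 4 * z by rewrite /t; ring.
  by rewrite Eh Ez; ring.
have : ((p%:Z) %| 4 * (t ^+ 2 - z))%Z by rewrite E4; apply/dvdzP; eexists; rewrite mulrC.
case/dvdz_prime_mul => // H; first by move: (not_dvd4 pr po); rewrite H.
exists (t%:~R); move: H; rewrite -Fp_int0 // rmorphB /= subr_eq0 => /eqP <-.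
by rewrite rmorphXn.
Qed.

Lemma pm1 (N N' P : int) : P != 0 -> (P %| N)%Z -> (P %| N')%Z -> N * N' = P ^+ 2 ->
  N = P \/ N = - P.
Proof.
move=> P0 /dvdzP [k ->] /dvdzP [k' ->] E.
have E1 : k * k' = 1.
  apply: (mulIf (expf_neq0 2 P0)); rewrite mul1r -[in RHS]E; ring.
have : (`|k| * `|k'| = 1)%N by rewrite -abszM E1.
move/eqP; rewrite muln_eq1 => /andP [/eqP Hk _].
clear E; case: k Hk {E1} => [n /= -> | n /= [] ->]; first by left; rewrite mul1r.
by right; rewrite NegzE mulNr mul1r.
Qed.

Section Ineq.
Variables (m : int) (p q : nat) (c0 cq : int).
Hypotheses (prp : prime p) (pop : odd p) (Emp : m = p%:Z * c0)
  (ncp : ~~ ((p%:Z) %| c0)%Z)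
  (prq : prime q) (poq : odd q) (Emq : m = q%:Z * cq) (ncq : ~~ ((q%:Z) %| cq)%Z)
  (pq : p != q)
  (nr1 : forall u : 'F_p, u ^+ 2 != (q%:Z * c0)%:~R)
  (nr2 : forall u : 'F_p, u ^+ 2 != (- (q%:Z * c0))%:~R).
Local Notation s := (sqrtC (m%:~R : algC)).

Lemma J_ineq : ~ ideal_equiv m (Jp m p) (Jp m q).
Proof.
move=> [a [b [Ha Hb a0 b0 E]]].
have nsq := nsq_m prp Emp ncp.
have Hp0 : (p%:R : algC) != 0 by rewrite pnatr_eq0 -lt0n prime_gt0.
have Hq0 : (q%:R : algC) != 0 by rewrite pnatr_eq0 -lt0n prime_gt0.
have [w1 Jw1 Ew1] : exists2 w1, Jp m p w1 & b * q%:R = a * w1.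
  have : scaleI b (Jp m q) (b * q%:R) by exists q%:R => //; apply: J_p.
  by move/E => [w Hw ->]; exists w.
have [w2 Jw2 Ew2] : exists2 w2, Jp m p w2 & b * s = a * w2.
  have : scaleI b (Jp m q) (b * s) by exists s => //; apply: J_s Emq.
  by move/E => [w Hw ->]; exists w.
have [z1 Jz1 Ez1] : exists2 z1, Jp m q z1 & a * p%:R = b * z1.
  have : scaleI a (Jp m p) (a * p%:R) by exists p%:R => //; apply: J_p.
  by move/E => [w Hw ->]; exists w.
have [z2 Jz2 Ez2] : exists2 z2, Jp m q z2 & a * s = b * z2.
  have : scaleI a (Jp m p) (a * s) by exists s => //; apply: J_s Emp.
  by move/E => [w Hw ->]; exists w.
have Jqw1 : Jp m q w1.
  split; first by case: Jw1.
  have -> : w1 * s / q%:R = w2.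
    apply: (mulfI a0); rewrite -Ew2 !mulrA -Ew1; field; exact: Hq0.
  by case: Jw2 => [[]].
have Jpz1 : Jp m p z1.
  split; first by case: Jz1.
  have -> : z1 * s / p%:R = z2.
    apply: (mulfI b0); rewrite -Ez2 !mulrA -Ez1; field; exact: Hp0.
  by case: Jz2 => [[]].
have Ewz : w1 * z1 = p%:R * q%:R.
  apply: (mulfI (mulf_neq0 a0 b0)).
  have -> : a * b * (w1 * z1) = (a * w1) * (b * z1) by ring.
  by rewrite -Ew1 -Ez1; ring.
have [A [B [N [Hc HN HJp]]]] := OK_norm prp Emp ncp (J_OK Jw1).
have HJq := J_iffN prq Emq ncq Hc (J_OK Jw1) HN.
have [A' [B' [N' [Hc' HN' HJp']]]] := OK_norm prp Emp ncp (J_OK Jz1).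
have HJq' := J_iffN prq Emq ncq Hc' (J_OK Jz1) HN'.
have HNN : N * N' = (p%:Z * q%:Z) ^+ 2.
  have Hcm := coords_mul Hc Hc'.
  have [HA1 HB1 E1] := Hcm.
  have Hpq : p%:R * q%:R \in Crat by rewrite rpredM ?rpred_nat.
  have E2 : (A * A' + m%:~R * B * B') + (A * B' + A' * B) * s = p%:R * q%:R + 0 * s.
    by rewrite -E1 Ewz mul0r addr0.
  have [EA EB] := rep_uniq nsq HA1 HB1 Hpq (rpred0 _) E2.
  apply: (@intr_inj algC); rewrite -(coords_normM Hc Hc' HN HN') EA EB.
  by rewrite rmorphXn rmorphM /= -!pmulrn expr0n mulr0 subr0.
have pqN : ((p%:Z * q%:Z) %| N)%Z.
  rewrite Gauss_dvdz; last by rewrite coprimezE /= prime_coprime // dvdn_prime2.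
  by apply/andP; split; [apply/HJp | apply/HJq].
have pqN' : ((p%:Z * q%:Z) %| N')%Z.
  rewrite Gauss_dvdz; last by rewrite coprimezE /= prime_coprime // dvdn_prime2.
  by apply/andP; split; [apply/HJp' | apply/HJq'].
have pq0 : p%:Z * q%:Z != 0 by rewrite mulf_neq0 // ?(Hp0Z prp) ?(Hp0Z prq).
have HNe := pm1 pq0 pqN pqN' HNN.
have Hw1 : w1 \in Aint by case: Jw1 => [[]].
have [X [N0 [U1 [HX HN0 HU1 HKI]]]] := KI prp Emp ncp Hc Hw1.
have EN0 : N0 = N by apply: (@intr_inj algC); rewrite -HN0 -HN.
rewrite EN0 in HKI.
have [e [Ne He]] : exists e : int, N = p%:Z * e /\ (e = q%:Z \/ e = - q%:Z).
  by case: HNe => ->; [exists q%:Z | exists (- q%:Z)]; split; rewrite ?mulrN; by [|left|right].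
have HpX : ((p%:Z) %| X)%Z.
  have : ((p%:Z) %| c0 * (X * X))%Z.
    apply/dvdzP; exists (4 * c0 * e + U1 ^+ 2); rewrite -expr2.
    have -> : c0 * X ^+ 2 = 4 * c0 * N + p%:Z * U1 ^+ 2 by rewrite -HKI; ring.
    by rewrite Ne; ring.
  case/dvdz_prime_mul => // H; first by move: ncp; rewrite H.
  by case: (dvdz_prime_mul prp H).
case/dvdzP: HpX => X1 EX.
have E3 : c0 * p%:Z * X1 ^+ 2 - U1 ^+ 2 = 4 * c0 * e.
  apply: (mulfI (Hp0Z prp)).
  have -> : p%:Z * (c0 * p%:Z * X1 ^+ 2 - U1 ^+ 2) = c0 * X ^+ 2 - p%:Z * U1 ^+ 2.
    by rewrite EX; ring.
  by rewrite HKI Ne; ring.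
case: He => He; rewrite He in E3.
- have E4 : c0 * p%:Z * X1 ^+ 2 - U1 ^+ 2 = - 4 * (- (q%:Z * c0)) by rewrite E3; ring.
  have [u Hu] := obstruct prp pop E4.
  by move: (nr2 u); rewrite Hu eqxx.
- have E4 : c0 * p%:Z * X1 ^+ 2 - U1 ^+ 2 = - 4 * (q%:Z * c0) by rewrite E3; ring.
  have [u Hu] := obstruct prp pop E4.
  by move: (nr1 u); rewrite Hu eqxx.
Qed.

End Ineq.

Definition PP (x : nat) := [/\ prime x, odd x & exists w : 'F_x, w ^+ 2 = -1].

Lemma big_prime (B : nat) : exists x, (B < x)%N /\ PP x.
Proof.
pose y := (B.+2)`!; pose N := (y ^ 2).+1.
have N1 : (1 < N)%N by rewrite ltnS expn_gt0 fact_gt0.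
pose x := pdiv N.
have prx : prime x := pdiv_prime N1.
have xN : (x %| N)%N := pdiv_dvd N.
have Bx : (B.+2 < x)%N.
  rewrite ltnNge; apply/negP => H.
  have xy : (x %| y)%N by apply: dvdn_fact; rewrite prime_gt0.
  have xy2 : (x %| y ^ 2)%N by rewrite (expnS y 1) expn1 dvdn_mulr.
  have : (x %| 1)%N by rewrite -(dvdn_addr 1 xy2) addn1.
  by rewrite dvdn1 => /eqP E; move: prx; rewrite E.
exists x; split; first by apply: ltn_trans Bx; rewrite ltnS leqnSn.
split => //.
  by case: (even_prime prx) => // E; move: Bx; rewrite E.
clearbody x; exists (y%:R).
have : (N%:R : 'F_x) == 0 by rewrite -(dvdn_pcharf (pchar_Fp prx)).
by rewrite /N -[(y ^ 2).+1]addn1 natrD natrX addr_eq0 => /eqP.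
Qed.

Lemma nonsq_exists (x : nat) : prime x -> odd x ->
  exists n : 'F_x, forall u : 'F_x, u ^+ 2 != n.
Proof.
move=> pr po; apply: NNPP => H.
have Hs : forall n : 'F_x, exists u : 'F_x, u ^+ 2 = n.
  move=> n; apply: NNPP => Hn; apply: H; exists n => u; apply/eqP => Eu.
  by apply: Hn; exists u.
have [g Hg] := fin_all_exists Hs.
have ginj : injective g by move=> a b Eab; rewrite -(Hg a) -(Hg b) Eab.
have /codomP [a Ea] := injF_onto ginj 1.
have /codomP [b Eb] := injF_onto ginj (-1).
have Ea1 : a = 1 by rewrite -(Hg a) -Ea expr1n.
have Eb1 : b = 1 by rewrite -(Hg b) -Eb sqrrN expr1n.
have : (1 : 'F_x) = -1 by rewrite {1}Ea Eb Ea1 Eb1.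
move/eqP; rewrite -subr_eq0 opprK => /eqP E.
by move: (Fp_2 pr po); rewrite mulr2n E eqxx.
Qed.

Definition goodT (t : seq nat) (rho : nat -> int) := uniq t /\
  forall j, (j < size t)%N ->
  [/\ PP (nth 0%N t j), ~~ (((nth 0%N t j)%:Z) %| rho (nth 0%N t j))%Z &
   forall i, (i < j)%N -> forall u : 'F_(nth 0%N t j),
     u ^+ 2 != ((nth 0%N t i)%:Z * rho (nth 0%N t j))%:~R /\
     u ^+ 2 != (- ((nth 0%N t i)%:Z * rho (nth 0%N t j)))%:~R].

Lemma Fp_natP (x y : nat) : prime x -> prime y -> x != y -> (y%:R : 'F_x) != 0.
Proof.
move=> px py xy; rewrite -(dvdn_pcharf (pchar_Fp px)) dvdn_prime2 //.
Qed.

Lemma ramsey_last (x : nat) (t : seq nat) (b : bool) : PP x -> x \notin t ->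
  (forall y, y \in t -> prime y) ->
  (forall y, y \in t -> [exists u : 'F_x, u ^+ 2 == y%:R] = b) ->
  exists rx : int, ~~ ((x%:Z) %| rx)%Z /\ forall y, y \in t -> forall u : 'F_x,
     u ^+ 2 != (y%:Z * rx)%:~R /\ u ^+ 2 != (- (y%:Z * rx))%:~R.
Proof.
move=> [px ox [w Hw]] xt Pt Qt.
have y0 : forall y, y \in t -> (y%:R : 'F_x) != 0.
  move=> y yt; apply: Fp_natP => //; first exact: Pt.
  by apply/eqP => E; move: xt; rewrite E yt.
case: b Qt => Qt.
- have [n Hn] := nonsq_exists px ox.
  have n0 : n != 0 by apply/eqP => E; move: (Hn 0); rewrite E expr0n eqxx.
  exists (n : nat)%:Z; split.
    by rewrite -Fp_int0 // -pmulrn natr_Zp.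
  move=> y yt u; have /existsP [v /eqP Hv] : [exists u : 'F_x, u ^+ 2 == y%:R] by rewrite Qt.
  have v0 : v != 0 by apply/eqP => E; move: (y0 y yt); rewrite -Hv E expr0n eqxx.
  rewrite rmorphN /= !rmorphM /= -!pmulrn natr_Zp -Hv; split; apply/eqP => E.
    by move: (Hn (u / v)); rewrite expr_div_n E mulrAC divff ?mul1r ?eqxx // expf_neq0.
  move: (Hn (w * u / v)); rewrite expr_div_n exprMn Hw E.
  by rewrite mulN1r opprK mulrAC divff ?mul1r ?eqxx // expf_neq0.
- exists 1; split.
    by rewrite -Fp_int0 // oner_eq0.
  move=> y yt u; have := Qt y yt => /negbT /existsPn Hy.
  rewrite mulr1 rmorphN /= -pmulrn; split; first exact: Hy.
  apply/eqP => E; move: (Hy (w * u)); rewrite exprMn Hw E mulN1r opprK eqxx //.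
Qed.

Lemma ramsey L : forall s : seq nat, uniq s -> (forall x, x \in s -> PP x) ->
  (2 ^ L <= size s)%N ->
  exists t rho, [/\ size t = L, {subset t <= s} & goodT t rho].
Proof.
elim: L => [|L IH] s us Ps Hs.
  by exists [::], (fun _ => 0); split => //; split.
case: s us Ps Hs => [|x s']; first by rewrite leqn0 expn_eq0.
move=> /andP [xs' us'] Ps Hs.
have PPx := Ps x (mem_head _ _).
have Ps' : forall y, y \in s' -> PP y by move=> y ys; apply: Ps; rewrite inE ys orbT.
pose QR := fun y : nat => [exists u : 'F_x, u ^+ 2 == y%:R].
have step : forall (S : seq nat) (b : bool), uniq S -> {subset S <= s'} ->
    (forall y, y \in S -> QR y = b) -> (2 ^ L <= size S)%N ->
    exists t rho, [/\ size t = L.+1, {subset t <= x :: s'} & goodT t rho].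
  move=> S b uS sS QS HS.
  have [t' [rho' [st' tS [ut' Gt']]]] := IH S uS (fun y yS => Ps' y (sS y yS)) HS.
  have xt' : x \notin t' by apply/negP => /tS /sS H; move: xs'; rewrite H.
  have [rx [nrx Hrx]] := @ramsey_last x t' b PPx xt'
     (fun y yt => let: And3 py _ _ := Ps' y (sS y (tS y yt)) in py)
     (fun y yt => QS y (tS y yt)).
  exists (rcons t' x), (fun y => if y == x then rx else rho' y); split.
  - by rewrite size_rcons st'.
  - move=> y; rewrite mem_rcons inE => /orP [/eqP -> | /tS /sS yS];
      [exact: mem_head | by rewrite inE yS orbT].
  split; first by rewrite rcons_uniq xt' ut'.
  move=> j; rewrite size_rcons ltnS leq_eqVlt => /orP [/eqP Ej | jt].
    rewrite nth_rcons Ej ltnn eqxx eqxx; split => // i it u.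
    rewrite nth_rcons it.
    have ni : nth 0%N t' i \in t' by rewrite mem_nth.
    exact: Hrx.
  have nj : nth 0%N t' j \in t' by rewrite mem_nth.
  have njx : (nth 0%N t' j == x) = false by apply/negP => /eqP E; move: xt'; rewrite -E nj.
  rewrite nth_rcons jt njx.
  have [H1 H2 H3] := Gt' j jt; split => // i ij u.
  rewrite nth_rcons (ltn_trans ij jt); exact: H3.
have HAB : (count QR s' + count (predC QR) s' = size s')%N by rewrite count_predC.
have [HA | HB] : (2 ^ L <= count QR s')%N \/ (2 ^ L <= count (predC QR) s')%N.
  move: Hs; rewrite /= expnS; move: HAB; set a := count _ _; set b := count _ _.
  set k := (2 ^ L)%N; lia.
- apply: (step [seq y <- s' | QR y] true).
  + by rewrite filter_uniq.
  + by move=> y; rewrite mem_filter => /andP [].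
  + by move=> y; rewrite mem_filter => /andP [].
  + by rewrite size_filter.
- apply: (step [seq y <- s' | predC QR y] false).
  + by rewrite filter_uniq.
  + by move=> y; rewrite mem_filter => /andP [].
  + by move=> y; rewrite mem_filter => /andP [/negPf].
  + by rewrite size_filter.
Qed.

Lemma good_fact (m : int) t rho : goodT t rho ->
  (forall x, x \in t -> ((x%:Z ^+ 2) %| m - x%:Z * rho x)%Z) ->
  forall j, (j < size t)%N -> exists c : int,
    [/\ m = (nth 0%N t j)%:Z * c, ~~ (((nth 0%N t j)%:Z) %| c)%Z &
        (c%:~R : 'F_(nth 0%N t j)) = (rho (nth 0%N t j))%:~R].
Proof.
move=> [ut Gt] Hd j jt.
set x := nth 0%N t j.
have [[px ox _] nr _] := Gt j jt.
have /dvdzP [k Ek] := Hd x (mem_nth 0%N jt).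
have Ec : (((rho x + k * x%:Z)%:~R) : 'F_x) = (rho x)%:~R.
  by rewrite intrD intrM -pmulrn (Fp_p0 px) mulr0 addr0.
exists (rho x + k * x%:Z); split => //.
- by rewrite -[m](subrK (x%:Z * rho x)) Ek; ring.
- by rewrite -Fp_int0 // Ec Fp_int0.
Qed.

Lemma ideal_equiv_sym m I J : ideal_equiv m I J -> ideal_equiv m J I.
Proof.
move=> [a [b [Ha Hb a0 b0 E]]]; exists b, a; split => // x; exact: iff_sym (E x).
Qed.

Lemma polya_of_good (R : realType) (m : int) (M : R) t rho : goodT t rho ->
  (forall x, x \in t -> ((x%:Z ^+ 2) %| m - x%:Z * rho x)%Z) ->
  M < (size t)%:R -> polya_gt m M.
Proof.
move=> G Hd HM; have [ut Gt] := G.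
have HF := good_fact G Hd.
exists [seq Jp m x | x <- t]; split.
- by rewrite size_map.
- move=> i; rewrite size_map => it; rewrite (nth_map 0%N) //.
  have [c [Em nc _]] := HF i it; have [[px ox _] _ _] := Gt i it.
  exact: J_Polya px ox Em nc.
- have key : forall i j, (i < j)%N -> (j < size t)%N ->
      ~ ideal_equiv m (Jp m (nth 0%N t j)) (Jp m (nth 0%N t i)).
    move=> i j ij jt; have it : (i < size t)%N := ltn_trans ij jt.
    have [c [Em nc Ec]] := HF j jt; have [[px ox _] _ Hnr] := Gt j jt.
    have [cq [Emq ncq _]] := HF i it; have [[pq oq _] _ _] := Gt i it.
    apply: (J_ineq px ox Em nc pq Emq ncq).
    + by rewrite nth_uniq // neq_ltn ij orbT.
    + move=> u; rewrite rmorphM /= Ec -rmorphM; exact: (Hnr i ij u).1.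
    + move=> u; rewrite rmorphN rmorphM /= Ec -rmorphM -rmorphN; exact: (Hnr i ij u).2.
  move=> i j; rewrite size_map => it jt nij.
  rewrite !(nth_map 0%N) //.
  case: (ltngtP i j) => [ij | ji | /eqP]; last by rewrite (negPf (introN eqP nij)).
    by move=> /ideal_equiv_sym; apply: key.
  exact: key.
Qed.

Lemma pool (n B : nat) : exists s : seq nat,
  [/\ size s = n, uniq s & forall x, x \in s -> (B < x)%N /\ PP x].
Proof.
elim: n => [|n [s [ss us Ps]]]; first by exists [::].
pose B' := maxn B (\max_(y <- s) y).
have [x [Bx PPx]] := big_prime B'.
exists (x :: s); split.
- by rewrite /= ss.
- rewrite /= us andbT; apply/negP => xs.
  have := leq_bigmax_seq (P := xpredT) (F := id) x xs isT; rewrite /=.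
  by move: Bx; rewrite /B' gtn_max => /andP [_ H1] H2; move: (leq_trans H1 H2); rewrite ltnn.
- move=> y; rewrite inE => /orP [/eqP -> | /Ps //]; split => //.
  by move: Bx; rewrite /B' gtn_max => /andP [].
Qed.

Lemma goodT_ext t rho rho' : (forall x, x \in t -> rho x = rho' x) ->
  goodT t rho -> goodT t rho'.
Proof.
move=> E [ut Gt]; split => // j jt.
rewrite -E ?mem_nth //; exact: Gt.
Qed.

Lemma construct (L k : nat) : exists (cs : seq (nat * int)) (ts : nat -> seq nat)
  (rho : nat -> int),
  [/\ uniq (map fst cs), forall c, c \in cs -> prime c.1 &
   forall i, (1 <= i <= k)%N -> [/\ size (ts i) = L, goodT (ts i) rho &
      forall x, x \in ts i -> (x, x%:Z * rho x - i%:Z) \in cs]].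
Proof.
elim: k => [|k [cs [ts [rho [ucs pcs Hts]]]]].
  by exists [::], (fun _ => [::]), (fun _ => 0); split => // i /andP [H1 H2]; move: (leq_trans H1 H2).
pose B := \max_(c <- cs) c.1.
have [s [ss us Ps]] := pool (2 ^ L) B.
have [t [rn [st ts_ Gt]]] := ramsey us (fun x xs => (Ps x xs).2) (eq_leq (esym ss)).
have tB : forall x, x \in t -> (B < x)%N by move=> x /ts_ /Ps [].
have csB : forall c, c \in cs -> (c.1 <= B)%N by move=> c cc; exact: (leq_bigmax_seq (P := xpredT) (F := fst) c cc isT).
pose rho' := fun y => if y \in t then rn y else rho y.
pose cs' := [seq (x, x%:Z * rn x - k.+1%:Z) | x <- t] ++ cs.
exists cs', (fun i => if i == k.+1 then t else ts i), rho'; split.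
- rewrite /cs' map_cat cat_uniq ucs andbT -map_comp map_id; apply/andP; split.
    by case: Gt.
  apply/hasPn => y /mapP [c cc ->]; apply/negP => ct.
  by have := tB _ ct; rewrite ltnNge csB.
- move=> c; rewrite mem_cat => /orP [/mapP [x xt ->] | /pcs //].
  by have [_ [px _ _]] := Ps x (ts_ x xt).
move=> i /andP [i1 ik]; case: eqP => [Ei | nEi].
- split => //.
    by apply: goodT_ext Gt => x xt; rewrite /rho' xt.
  by move=> x xt; rewrite mem_cat Ei /rho' xt; apply/orP; left; apply: map_f.
- have ik' : (i <= k)%N by rewrite leq_eqVlt ltnS in ik; case/orP: ik => // /eqP.
  have [H1 H2 H3] := Hts i (introT andP (conj i1 ik')).
  have nt : forall x, x \in ts i -> x \notin t.
    move=> x xi; apply/negP => xt; have := tB _ xt.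
    by rewrite ltnNge (csB _ (H3 _ xi)).
  split => //.
    by apply: goodT_ext H2 => x xi; rewrite /rho' (negPf (nt x xi)).
  move=> x xi; rewrite mem_cat /rho' (negPf (nt x xi)); apply/orP; right; exact: H3.
Qed.

Lemma coprimez_primes (x y : nat) : prime x -> prime y -> x != y ->
  coprimez (x%:Z ^+ 2) (y%:Z ^+ 2).
Proof.
move=> px py xy; rewrite coprimez_pexpl // coprimez_pexpr //.
by rewrite coprimezE /= prime_coprime // dvdn_prime2.
Qed.

Lemma crt (cs : seq (nat * int)) : uniq (map fst cs) ->
  (forall c, c \in cs -> prime c.1) ->
  exists d0 Mp : int, [/\ 0 < Mp,
    (forall y : nat, prime y -> y \notin map fst cs -> coprimez (y%:Z ^+ 2) Mp) &
    forall c, c \in cs -> ((c.1%:Z ^+ 2) %| Mp)%Z /\ ((c.1%:Z ^+ 2) %| d0 - c.2)%Z].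
Proof.
elim: cs => [|[x r] cs IH] /=.
  move=> _ _; exists 0, 1; split => //.
  by move=> y _ _; rewrite coprimezE /= coprimen1.
move=> /andP [xcs ucs] Pcs.
have px : prime x by apply: (Pcs (x, r)); rewrite mem_head.
have Pcs' : forall c, c \in cs -> prime c.1 by move=> c cc; apply: Pcs; rewrite inE cc orbT.
have [d0 [Mp [Mp0 Cop Hd]]] := IH ucs Pcs'.
have cop := Cop x px xcs.
pose d := zchinese (x%:Z ^+ 2) Mp r d0.
have x20 : 0 < x%:Z ^+ 2 by rewrite exprn_gt0 // ltz_nat prime_gt0.
exists d, (x%:Z ^+ 2 * Mp); split.
- by rewrite mulr_gt0.
- move=> y py; rewrite inE negb_or => /andP [yx ycs].
  by rewrite coprimezMr coprimez_primes // Cop.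
- move=> c; rewrite inE => /orP [/eqP -> | cc] /=.
    split; first by apply: dvdz_mulr.
    by rewrite -eqz_mod_dvd; apply/eqP; apply: zchinese_modl.
  have [H1 H2] := Hd c cc; split; first by apply: dvdz_mull.
  have -> : d - c.2 = (d - d0) + (d0 - c.2) by ring.
  apply: rpredD => //; apply: dvdz_trans H1 _.
  by rewrite -eqz_mod_dvd; apply/eqP; apply: zchinese_modr.
Qed.

Unset Implicit Arguments.
Set Strict Implicit.

Theorem mainTheorem3 (R : realType) (k : nat) (M : R) :
  (1 <= k)%N -> 0 < M ->
  (exists d : int, forall i : nat, (1 <= i <= k)%N ->
     [/\ 0 < d + i%:Z, not_square (d + i%:Z) & polya_gt (d + i%:Z) M]) /\
  (exists d' : int, forall i : nat, (1 <= i <= k)%N ->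
     d' + i%:Z < 0 /\ polya_gt (d' + i%:Z) M).
Proof.
move=> k1 M0.
pose L := (Num.trunc M).+1.
have ML : M < L%:R := truncnS_gt M.
have [cs [ts [rho [ucs pcs Hts]]]] := construct L k.
have [d0 [Mp [Mp0 _ Hd]]] := crt ucs pcs.
have gen : forall (K : int) i, (1 <= i <= k)%N ->
    polya_gt (d0 + K * Mp + i%:Z) M /\ not_square (d0 + K * Mp + i%:Z).
  move=> K i ik; have [sz G Hin] := Hts i ik.
  have Hdv : forall x, x \in ts i ->
      ((x%:Z ^+ 2) %| (d0 + K * Mp + i%:Z) - x%:Z * rho x)%Z.
    move=> x xi; have [H1 H2] := Hd _ (Hin x xi); rewrite /= in H1 H2.
    have -> : d0 + K * Mp + i%:Z - x%:Z * rho x =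
        (d0 - (x%:Z * rho x - i%:Z)) + K * Mp by ring.
    by apply: rpredD => //; apply: dvdz_mull.
  split; first by apply: (polya_of_good G Hdv); rewrite sz.
  have L0 : (0 < size (ts i))%N by rewrite sz.
  have [c [Em nc _]] := good_fact G Hdv L0.
  have [[px _ _] _ _] := G.2 0%N L0.
  exact: nsq_m px Em nc.
have Mp1 : 1 <= Mp by [].
have hn : -d0 <= `|d0| by rewrite -normrN ler_norm.
have hp : d0 <= `|d0| by rewrite ler_norm.
split.
- exists (d0 + `|d0| * Mp) => i ik; have [G1 G2] := gen `|d0| i ik.
  split => //.
  have h1 : `|d0| <= `|d0| * Mp by apply: ler_peMr.
  move: ik => /andP [i1 _].
  have i1' : 1 <= i%:Z by rewrite lez_nat.
  lia.
- exists (d0 + (- (`|d0| + k%:Z + 1)) * Mp) => i ik; have [G1 G2] := gen (- (`|d0| + k%:Z + 1)) i ik.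
  split => //.
  have h1 : `|d0| + k%:Z + 1 <= (`|d0| + k%:Z + 1) * Mp.
    by apply: ler_peMr => //; rewrite addr_ge0 // addr_ge0.
  move: ik => /andP [_ ik].
  have ik' : i%:Z <= k%:Z by rewrite lez_nat.
  rewrite mulNr; lia.
Qed.
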